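(* Let $r$ be a positive integer and let $n\in F_r$. Then $\displaystyle R(n)<\frac{J_r}{r}\,Q_1(n)\,(Q_1(n)-r)$.
   Context: For a positive integer $r$, $S_r$ is the multiplicative arithmetic function with $S_r(p^{\alpha})=0$ if $p\leq r$ and $S_r(p^{\alpha})=p^{\alpha-1}(p-r)$ if $p>r$, for all primes $p$ and positive integers $\alpha$. $B_r=\{n\in\mathbb{N}: S_r(n)>0\}$ (positive integers whose smallest prime factor exceeds $r$, together with $1$). $F_r$ is the set of $n\in B_r$ such that $S_r(n)<S_r(m)$ for all $m\in B_r$ with $m>n$. $R(n)=n\prod_{p\text{ prime},\,p\mid n}p^{-1}$. $Q_1(n)$ is the smallest prime that is larger than $r$ and does not divide $n$. $r\#$ is the product of all primes $\leq r$ (with $1\#=1$). The Jacobsthal function $J(m)$ is the smallest positive integer $a$ such that every set of $a$ consecutive integers contains an element coprime to $m$; $J_r=J(r\#)$. *)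

(* Defs.v *)
From mathcomp Require Import all_boot all_order all_algebra.
Set Implicit Arguments. Unset Strict Implicit. Unset Printing Implicit Defensive.

(* S_r(n) = prod_{p^a || n} S_r(p^a), with S_r(p^a) = p^(a-1) (p - r);
   truncated subtraction gives p - r = 0 exactly when p <= r. *)
Definition S (r n : nat) : nat :=
  \prod_(p <- primes n) (p ^ (logn p n).-1 * (p - r)).

Definition inB (r n : nat) : bool := (0 < n) && (0 < S r n).

Definition inF (r n : nat) : Prop :=
  inB r n /\ forall m, inB r m -> n < m -> S r n < S r m.

Definition Rn (n : nat) : nat := n %/ \prod_(p <- primes n) p.

Definition is_Q1 (r n q : nat) : Prop :=
  [/\ prime q, r < q, ~~ (q %| n) &
      forall p, prime p -> r < p -> ~~ (p %| n) -> q <= p].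

Definition primorial (r : nat) : nat := \prod_(p < r.+1 | prime p) p.

Definition jacob_prop (m a : nat) : Prop :=
  forall k : int, exists2 i : nat, i < a & coprimez (k + i%:Z) m%:Z.

Definition is_Jacobsthal (m a : nat) : Prop :=
  [/\ 0 < a, jacob_prop m a & forall b, 0 < b -> jacob_prop m b -> a <= b].

(* Main.v *)
Require Import Defs.
From mathcomp Require Import all_boot all_order all_algebra.
Import GRing.Theory Num.Theory.

Definition G (r m p : nat) : nat :=
  if p \in primes m then p ^ (logn p m).-1 * (p - r) else 1.

Lemma SE r m N : 0 < m -> m < N -> S r m = \prod_(0 <= p < N) G r m p.
Proof.
move=> m0 mN; rewrite /S -(filter_pi_of mN) big_filter big_mkcond.
by apply: eq_bigr => p _; rewrite /G.
Qed.

Lemma partE b N : 0 < b -> b < N -> b = \prod_(0 <= p < N) p ^ logn p b.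
Proof.
move=> b0 bN; have bN' : b <= N.-1 by rewrite -ltnS prednK // (leq_ltn_trans _ bN).
rewrite -{1}(partnT b0) (widen_partn _ bN') prednK ?(leq_ltn_trans _ bN) //.
Qed.

Lemma S_mul_le r a b : 0 < a -> 0 < b -> S r (a * b) <= S r a * b.
Proof.
move=> a0 b0; have ab0 : 0 < a * b by rewrite muln_gt0 a0.
have aN : a < (a * b).+1 by rewrite ltnS leq_pmulr.
rewrite (SE r _ _ ab0 (ltnSn _)) (SE r _ _ a0 aN) [X in _ <= _ * X](partE _ _ b0 (_ : b < (a*b).+1)); last by rewrite ltnS leq_pmull.
rewrite -big_split /=; apply: leq_prod => p _.
rewrite /G primesM // lognM //.
case pa: (p \in primes a) => /=.
  have : 0 < logn p a by rewrite logn_gt0.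
  case: (logn p a) => // la _; rewrite addSn /= -mulnA [_ * p ^ _]mulnC mulnA -expnD.
  done.
rewrite mul1n; move: pa; rewrite -(logn_gt0 p a) lt0n => /negbFE/eqP ->; rewrite add0n.
case: ifP => pb.
  have : 0 < logn p b by rewrite logn_gt0.
  case: (logn p b) => // lb _ /=; rewrite expnSr leq_mul2l leq_subr orbT //.
by move: pb; rewrite -(logn_gt0 p b) lt0n => /negbFE/eqP ->.
Qed.

Lemma S_mul_prime r d q : 0 < d -> prime q -> ~~ (q %| d) ->
  S r (d * q) = S r d * (q - r).
Proof.
move=> d0 pq qd; have q0 := prime_gt0 pq.
have dq0 : 0 < d * q by rewrite muln_gt0 d0.
have dN : d < (d * q).+1 by rewrite ltnS leq_pmulr.
have qN : q < (d * q).+1 by rewrite ltnS leq_pmull.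
rewrite (SE r _ _ dq0 (ltnSn _)) (SE r _ _ d0 dN).
have -> : q - r = \prod_(0 <= p < (d * q).+1) (if p == q then q - r else 1).
  by rewrite -big_mkcond big_nat1_eq qN.
rewrite -big_split /=; apply: eq_bigr => p _.
rewrite /G primesM // [primes q]primes_prime // inE lognM // [logn p q]logn_prime //.
have [-> | npq] := eqP.
  have -> : (q \in primes d) = false by rewrite mem_primes pq d0 (negbTE qd).
  by rewrite /= logn_coprime ?prime_coprime.

by rewrite orbF addn0 muln1.
Qed.

Lemma logn_rad s p : uniq s -> all prime s -> logn p (\prod_(x <- s) x) = (p \in s).
Proof.
elim: s => [|x s IH] /=; first by rewrite big_nil logn1.
case/andP => xs us /andP [px ps].
have P0 : 0 < \prod_(y <- s) y.
  by rewrite big_seq; apply: prodn_cond_gt0 => y ys; apply: prime_gt0; exact: (allP ps).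
rewrite big_cons (lognM _ (prime_gt0 px) P0) (IH us ps) logn_prime // inE.
case: eqP => [->|] //=. by rewrite (negbTE xs).
Qed.

Lemma primes_rad n : primes (\prod_(p <- primes n) p) = primes n.
Proof.
apply/eq_primes => p; rewrite -logn_gt0 logn_rad ?primes_uniq ?all_prime_primes //.
by case: (p \in primes n).
Qed.

Lemma S_rad r n : S r (\prod_(p <- primes n) p) = \prod_(p <- primes n) (p - r).
Proof.
rewrite /S primes_rad; apply: eq_big_seq => p pn.
by rewrite logn_rad ?primes_uniq ?all_prime_primes // pn /= expn0 mul1n.
Qed.

Lemma n_decomp n : 0 < n ->
  n = (\prod_(p <- primes n) p ^ (logn p n).-1) * \prod_(p <- primes n) p.
Proof.
move=> n0; rewrite {1}(prod_prime_decomp n0) prime_decompE big_map -big_split.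
apply: eq_big_seq => p pn /=; rewrite -expnSr prednK // logn_gt0 //.
Qed.

Lemma S_n r n : 0 < n -> S r n = Rn n * S r (\prod_(p <- primes n) p).
Proof.
move=> n0; rewrite /Rn {2}(n_decomp _ n0) mulnK; last first.
  by rewrite big_seq; apply: prodn_cond_gt0 => y ys; apply: prime_gt0;
     exact: (allP (all_prime_primes n)).
by rewrite S_rad /S -big_split.
Qed.

Lemma S_pos r m : (forall p, p \in primes m -> r < p) -> 0 < S r m.
Proof.
move=> H; rewrite /S big_seq; apply: prodn_cond_gt0 => p pm.
rewrite muln_gt0 expn_gt0 subn_gt0 H // andbT.
by rewrite prime_gt0 // (allP (all_prime_primes m)).
Qed.

Lemma dvd_primorial r p : prime p -> p <= r -> p %| primorial r.
Proof.
move=> pp pr; have pr1 : p < r.+1 by [].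
by rewrite /primorial (bigD1 (Ordinal pr1)) //= dvdn_mulr.
Qed.

From mathcomp Require Import ring lra zify.

Theorem lemma3p5 (r n q J : nat) :
  0 < r -> inF r n -> is_Q1 r n q -> is_Jacobsthal (primorial r) J ->
  ((Rn n)%:Q < (J%:Q / r%:Q) * q%:Q * (q%:Q - r%:Q))%R.
Proof.
move=> r0 [/andP [n0 Sn0] Fn] [pq rq qn qmin] [J0 Jp Jmin].
set d := \prod_(p <- primes n) p.
have d0 : 0 < d.
  by rewrite /d big_seq; apply: prodn_cond_gt0 => y ys; apply: prime_gt0;
     exact: (allP (all_prime_primes n)).
have nE : n = Rn n * d.
  rewrite /Rn -/d divnK // (n_decomp _ n0) dvdn_mull //.
set R := Rn n in nE *.
have R0 : 0 < R by move: n0; rewrite nE muln_gt0 => /andP [].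
have qd : ~~ (q %| d).
  apply: contra qn => qd; rewrite nE; exact: dvdn_mull.
have q0 : 0 < q by apply: prime_gt0.
have primn : forall p, p \in primes n -> r < p.
  move=> p pn; have := @gt0_prodn_seq _ _ _ _ Sn0 _ pn isT.
  by rewrite muln_gt0 subn_gt0 => /andP [].
suff H : R * r < J * q * (q - r).
  have E : (J%:Q / r%:Q * q%:Q * (q%:Q - r%:Q) = (J * q * (q - r))%:R / r%:R)%R.
    rewrite !natrM natrB ?(ltnW rq) //; field.
    by rewrite pnatr_eq0 -lt0n.
  by rewrite E ltr_pdivlMr ?ltr0n // -natrM ltr_nat.
rewrite ltnNge; apply/negP => H.
set a := R %/ q.
have [i iJ cop] := Jp (Posz a.+1).
have cj : coprime (a.+1 + i) (primorial r).
  by move: cop; rewrite -PoszD coprimezE.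
set j := a.+1 + i in cj.
have j0 : 0 < j by rewrite /j addSn.
have Rqj : R < q * j.
  apply: (leq_trans (ltn_ceil R q0)); rewrite mulnC leq_mul2l leq_addr orbT //.
have aq : a * q <= R by rewrite /a leq_trunc_div.
have jR : j * (q - r) <= R.
  have ja : j <= a + J by rewrite /j addSn -addnS leq_add2l.
  apply: (leq_trans (leq_mul ja (leqnn _))).
  rewrite -(leq_pmul2r q0).
  nia.
set m := d * q * j.
have m0 : 0 < m by rewrite /m !muln_gt0 d0 q0 j0.
have nm : n < m by rewrite nE /m mulnC -mulnA ltn_pmul2l.
have Sm : S r m <= S r n.
  apply: (leq_trans (S_mul_le r (d * q) j _ j0)); first by rewrite muln_gt0 d0.
  rewrite S_mul_prime // (S_n r n n0) -/d -mulnA [Rn n * _]mulnC leq_mul2l mulnC jR orbT //.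
have Bm : inB r m.
  rewrite /inB m0 /=; apply: S_pos => p; rewrite mem_primes => /and3P [pp _].
  rewrite !Euclid_dvdM // -orbA => /or3P [pd | pq' | pj].
  - apply: primn; rewrite -primes_rad mem_primes pp d0 pd //.
  - by move: pq'; rewrite dvdn_prime2 // => /eqP ->.
  - rewrite ltnNge; apply/negP => pr.
    have := coprime_dvdl pj cj; rewrite prime_coprime // dvd_primorial // ltnW.
have := Fn m Bm nm; rewrite ltnNge Sm //.
Qed.
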